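(* For $i\in\{1,2\}$ let $\Sigma_{i,\mathbb{T}}$ be the linear time-varying system $x_i(t+1)=A_i(t)x_i(t)+B_i(t)u_i(t)$, $y_i(t)=C_i(t)x_i(t)+D_i(t)u_i(t)$, $t\in\mathbb{T}=\{0,\dots,T-1\}$, with $u_i(t)\in\mathbb{R}^{n_u}$, $y_i(t)\in\mathbb{R}^{n_y}$ and initial state $x_i(0)=x_{i0}$, and let $\mathcal{B}_{i,x_{i0}}$ be its admissible behavior. For each $i$, let test inputs $\mathbf{u}_i^0,\dots,\mathbf{u}_i^{n_uT}\in\mathbb{R}^{n_uT}$ be applied from $x_{i0}$ with outputs $\mathbf{y}_i^k$, where $\mathbf{u}_i^0=0$ and $\operatorname{rank}[\mathbf{u}_i^1,\dots,\mathbf{u}_i^{n_uT}]=n_uT$; let $w_i^k=\operatorname{col}(\mathbf{u}_i^k,\mathbf{y}_i^k)$, $W_i=[w_i^1-w_i^0,\dots,w_i^{n_uT}-w_i^0]$, and let $H_i\in\mathbb{R}^{n_wT\times n_uT}$ be a matrix whose columns form an orthonormal basis of $\operatorname{span}(W_i)$. Then $\mathcal{B}_{1,x_{10}}$ and $\mathcal{B}_{2,x_{20}}$ are similar (i.e. $\mathcal{B}_{1,x_{10}}\cap\mathcal{B}_{2,x_{20}}\neq\emptyset$) if and only if there exist $l_1,l_2\in\mathbb{R}^{n_uT}$ such that $[H_1\ \ H_2]\begin{bmatrix}l_1\\ l_2\end{bmatrix}=w_2^0-w_1^0$. Moreover, the common behavior is $\mathcal{B}_{1,x_{10}}\cap\mathcal{B}_{2,x_{20}}=\{H_1l_1+w_1^0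 : (l_1,l_2)\text{ solves this equation}\}$.
   Context: $n_w=n_u+n_y$. Supervectors over $\mathbb{T}$: $\mathbf{u}_i=[u_i(0)^{\rm T},\dots,u_i(T-1)^{\rm T}]^{\rm T}$, likewise $\mathbf{y}_i,\mathbf{x}_i$. The admissible behavior $\mathcal{B}_{i,x_{i0}}\subseteq\mathbb{R}^{n_wT}$ is the set of all $\operatorname{col}(\mathbf{u}_i,\mathbf{y}_i)$ for which there exists a state supervector $\mathbf{x}_i$ with $x_i(0)=x_{i0}$ such that $(\mathbf{u}_i,\mathbf{y}_i,\mathbf{x}_i)$ satisfies the system equations. $\mathbf{y}_i^k$ denotes the output supervector of $\Sigma_{i,\mathbb{T}}$ under input $\mathbf{u}_i^k$ from $x_i(0)=x_{i0}$. Two admissible behaviors are called similar if their intersection is nonempty. *)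

(* Defs.v *)
From HB Require Import structures.
From mathcomp Require Import all_boot all_order all_algebra.
Set Implicit Arguments. Unset Strict Implicit. Unset Printing Implicit Defensive.
Import Order.TTheory GRing.Theory Num.Theory.
Local Open Scope ring_scope.

(* Supervectors over T = {0,...,T-1}: v = col(v(0),...,v(T-1)) with
   v(t) in R^n, stored as a column vector of size T*n, where entry j of
   block t sits at position t*n + j. *)
Lemma sv_index_lt (T n : nat) (t : 'I_T) (j : 'I_n) : (t * n + j < T * n)%N.
Proof.
case: t => t ht; case: j => j hj /=.
apply: (@leq_trans ((t.+1) * n)); first by rewrite mulSn addnC ltn_add2r.
by rewrite leq_mul2r ht orbT.
Qed.

Definition sv_index (T n : nat) (t : 'I_T) (j : 'I_n) : 'I_(T * n) :=
  Ordinal (sv_index_lt t j).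

Definition blk (R : Type) (T n : nat) (v : 'cV[R]_(T * n)) (t : 'I_T) : 'cV[R]_n :=
  \col_(j < n) v (sv_index t j) 0.

Definition behavior (R : pzRingType) (nu ny nx : nat) (T : nat)
  (A : nat -> 'M[R]_nx) (B : nat -> 'M[R]_(nx, nu))
  (C : nat -> 'M[R]_(ny, nx)) (D : nat -> 'M[R]_(ny, nu)) (x0 : 'cV[R]_nx)
  (w : 'cV[R]_(T * nu + T * ny)) : Prop :=
  exists x : nat -> 'cV[R]_nx,
    x 0%N = x0 /\
    forall t : 'I_T,
      x t.+1 = A t *m x t + B t *m blk (usubmx w) t /\
      blk (dsubmx w) t = C t *m x t + D t *m blk (usubmx w) t.

Definition ltv_diffmx (R : pzRingType) (m N : nat) (v : 'I_N.+1 -> 'cV[R]_m) : 'M[R]_(m, N) :=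
  \matrix_(r < m, k < N) (v (lift ord0 k) r 0 - v ord0 r 0).

Definition ltv_colsmx (R : Type) (m N : nat) (v : 'I_N.+1 -> 'cV[R]_m) : 'M[R]_(m, N) :=
  \matrix_(r < m, k < N) v (lift ord0 k) r 0.

Definition orthonormal_basis_of_span (R : numFieldType) (m p q : nat)
  (H : 'M[R]_(m, p)) (W : 'M[R]_(m, q)) : Prop :=
  H^T *m H = 1%:M /\ (H^T == W^T)%MS.

Arguments behavior [R nu ny nx] T A B C D x0 w.

(* Main.v *)
Require Import Defs.
From HB Require Import structures.
From mathcomp Require Import all_boot all_order all_algebra.
Import Order.TTheory GRing.Theory Num.Theory.
Local Open Scope ring_scope.

Section H.
Variable R : realFieldType.
Variables (nu ny nx T : nat).
Variables (A : nat -> 'M[R]_nx) (B : nat -> 'M[R]_(nx, nu))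
  (C : nat -> 'M[R]_(ny, nx)) (D : nat -> 'M[R]_(ny, nu)).

Lemma blkB n (v w : 'cV[R]_(T * n)) t : blk (v - w) t = blk v t - blk w t.
Proof. by apply/matrixP => i j; rewrite !mxE. Qed.
Lemma blkD n (v w : 'cV[R]_(T * n)) t : blk (v + w) t = blk v t + blk w t.
Proof. by apply/matrixP => i j; rewrite !mxE. Qed.
Lemma blkZ n a (v : 'cV[R]_(T * n)) t : blk (a *: v) t = a *: blk v t.
Proof. by apply/matrixP => i j; rewrite !mxE. Qed.
Lemma blk0 n t : blk (0 : 'cV[R]_(T * n)) t = 0.
Proof. by apply/matrixP => i j; rewrite !mxE. Qed.

Lemma blk_eq0 n (v : 'cV[R]_(T * n)) : (forall t, blk v t = 0) -> v = 0.
Proof.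
move=> Hv; apply/matrixP => i j; rewrite (ord1 j) mxE.
have n0 : (0 < n)%N by case: n v Hv i {j} => [|//] v _ [i]; rewrite muln0.
have ht : (i %/ n < T)%N by rewrite ltn_divLR.
have hj : (i %% n < n)%N by rewrite ltn_mod.
have -> : i = sv_index (Ordinal ht) (Ordinal hj).
  by apply: val_inj => /=; rewrite -divn_eq.
have := congr1 (fun M : 'cV[R]_n => M (Ordinal hj) ord0) (Hv (Ordinal ht)).
by rewrite !mxE.
Qed.

Lemma beh_sub x0 w w' : behavior T A B C D x0 w -> behavior T A B C D x0 w' ->
  behavior T A B C D 0 (w - w').
Proof.
move=> [x [x00 Hx]] [x' [x00' Hx']].
exists (fun t => x t - x' t); split; first by rewrite x00 x00' subrr.
move=> t; have [e1 e2] := Hx t; have [e1' e2'] := Hx' t.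
rewrite !linearB /= !blkB e1 e1' e2 e2' !mulmxBr.
by split; rewrite opprD addrACA.
Qed.

Lemma beh_add x0 w d : behavior T A B C D x0 w -> behavior T A B C D 0 d ->
  behavior T A B C D x0 (w + d).
Proof.
move=> [x [x00 Hx]] [x' [x00' Hx']].
exists (fun t => x t + x' t); split; first by rewrite x00 x00' addr0.
move=> t; have [e1 e2] := Hx t; have [e1' e2'] := Hx' t.
rewrite !linearD /= !blkD e1 e1' e2 e2' !mulmxDr.
by split; rewrite addrACA.
Qed.

Lemma beh_scale a d : behavior T A B C D 0 d -> behavior T A B C D 0 (a *: d).
Proof.
move=> [x [x00 Hx]].
exists (fun t => a *: x t); split; first by rewrite x00 scaler0.
move=> t; have [e1 e2] := Hx t.
rewrite !linearZ /= !blkZ e1 e2 !scalerDr !scalemxAr.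
by split.
Qed.

Lemma beh_zero : behavior T A B C D 0 0.
Proof.
exists (fun _ => 0); split => // t.
have Hb : blk (usubmx (0 : 'cV[R]_(T * nu + T * ny))) t = 0 by apply/matrixP => i j; rewrite !mxE.
have Hb' : blk (dsubmx (0 : 'cV[R]_(T * nu + T * ny))) t = 0 by apply/matrixP => i j; rewrite !mxE.
rewrite Hb Hb' !mulmx0 addr0.
by rewrite addr0.
Qed.

Lemma beh_uniq d : behavior T A B C D 0 d -> usubmx d = 0 -> d = 0.
Proof.
move=> [x [x00 Hx]] Hu.
have Hb : forall t, blk (usubmx d) t = 0 by move=> t; rewrite Hu; apply: blk0.
have Hx0 : forall t, (t <= T)%N -> x t = 0.
  elim=> [//|t IH] ht.
  have [e1 _] := Hx (Ordinal ht).
  by rewrite /= in e1; rewrite e1 IH ?(ltnW ht) // Hb !mulmx0 addr0.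
have Hd : dsubmx d = 0.
  apply: blk_eq0 => t; have [_ e2] := Hx t.
  by rewrite e2 Hb Hx0 ?(ltnW (ltn_ord t)) // !mulmx0 addr0.
by rewrite -[d]vsubmxK Hu Hd col_mx0.
Qed.


Lemma diff_col m N (v : 'I_N.+1 -> 'cV[R]_m) k :
  col k (ltv_diffmx v) = v (lift ord0 k) - v ord0.
Proof. by apply/matrixP => i j; rewrite !mxE (ord1 j). Qed.

Lemma mul_sum_col m N (W : 'M[R]_(m, N)) (c : 'cV[R]_N) :
  W *m c = \sum_k c k 0 *: col k W.
Proof.
apply/matrixP => i j; rewrite !mxE summxE; apply: eq_bigr => k _.
by rewrite !mxE (ord1 j) mulrC.
Qed.

Lemma beh_system (x0 : 'cV[R]_nx) (u : 'I_(T * nu).+1 -> 'cV[R]_(T * nu))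
  (y : 'I_(T * nu).+1 -> 'cV[R]_(T * ny)) (H : 'M[R]_(T * nu + T * ny, T * nu)) :
  u ord0 = 0 -> \rank (ltv_colsmx u) = (T * nu)%N ->
  (forall k, behavior T A B C D x0 (col_mx (u k) (y k))) ->
  orthonormal_basis_of_span H (ltv_diffmx (fun k => col_mx (u k) (y k))) ->
  forall w, behavior T A B C D x0 w <->
    exists l, w = H *m l + col_mx (u ord0) (y ord0).
Proof.
move=> u0 rk Hb [_ /andP [sHW sWH]] w.
set W := ltv_diffmx (fun k => col_mx (u k) (y k)); set w0 := col_mx (u ord0) (y ord0).
have Wb : forall c, behavior T A B C D x0 (w0 + W *m c).
  move=> c; apply: beh_add; first exact: Hb.
  rewrite mul_sum_col; apply: (big_ind (behavior T A B C D 0)).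
  - exact: beh_zero.
  - by move=> a b ha hb; apply: beh_add.
  - move=> k _; apply: beh_scale; rewrite diff_col; exact: beh_sub.
have uW : usubmx W = ltv_colsmx u.
  by apply/matrixP => i j; rewrite !mxE (@unsplitK (T * nu) (T * ny) (inl i)) u0 mxE subr0.
have Uu : ltv_colsmx u \in unitmx by rewrite -row_free_unit /row_free rk.
have spanWH : forall v, (exists c, v = W *m c) <-> (exists l, v = H *m l).
  move=> v; split=> [[c ->]|[l ->]].
  - have /submxP [E HE] := submx_trans (submxMl c^T W^T) sWH.
    by exists E^T; rewrite -[LHS]trmxK trmx_mul HE trmx_mul trmxK.
  - have /submxP [E HE] := submx_trans (submxMl l^T H^T) sHW.
    by exists E^T; rewrite -[LHS]trmxK trmx_mul HE trmx_mul trmxK.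
have eqv : behavior T A B C D x0 w <-> exists c, w = W *m c + w0.
  split=> [bw|[c ->]]; last by rewrite addrC.
  exists (invmx (ltv_colsmx u) *m usubmx w).
  apply/eqP; rewrite -subr_eq0; apply/eqP; apply: beh_uniq.
    by apply: (@beh_sub x0 w _ bw); rewrite addrC; apply: Wb.
  rewrite !linearB linearD /= -mul_usub_mx uW mulKVmx // col_mxKu u0.
  by rewrite addr0 subrr.
apply: (iff_trans eqv); split=> [[c ->]|[l ->]].
- have [l hl] := proj1 (spanWH _ (W *m c)) (ex_intro _ c erefl).
  by exists l; rewrite hl.
- have [c hc] := proj2 (spanWH _ (H *m l)) (ex_intro _ l erefl).
  by exists c; rewrite hc.
Qed.
End H.

Theorem lemma2 (R : realFieldType) (nu ny T n1 n2 : nat)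
  (A1 : nat -> 'M[R]_n1) (B1 : nat -> 'M[R]_(n1, nu))
  (C1 : nat -> 'M[R]_(ny, n1)) (D1 : nat -> 'M[R]_(ny, nu)) (x10 : 'cV[R]_n1)
  (A2 : nat -> 'M[R]_n2) (B2 : nat -> 'M[R]_(n2, nu))
  (C2 : nat -> 'M[R]_(ny, n2)) (D2 : nat -> 'M[R]_(ny, nu)) (x20 : 'cV[R]_n2)
  (u1 u2 : 'I_(T * nu).+1 -> 'cV[R]_(T * nu))
  (y1 y2 : 'I_(T * nu).+1 -> 'cV[R]_(T * ny))
  (H1 H2 : 'M[R]_(T * nu + T * ny, T * nu)) :
  u1 ord0 = 0 -> u2 ord0 = 0 ->
  \rank (ltv_colsmx u1) = (T * nu)%N -> \rank (ltv_colsmx u2) = (T * nu)%N ->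
  (forall k, behavior T A1 B1 C1 D1 x10 (col_mx (u1 k) (y1 k))) ->
  (forall k, behavior T A2 B2 C2 D2 x20 (col_mx (u2 k) (y2 k))) ->
  orthonormal_basis_of_span H1 (ltv_diffmx (fun k => col_mx (u1 k) (y1 k))) ->
  orthonormal_basis_of_span H2 (ltv_diffmx (fun k => col_mx (u2 k) (y2 k))) ->
  let w10 := col_mx (u1 ord0) (y1 ord0) in
  let w20 := col_mx (u2 ord0) (y2 ord0) in
  ((exists w, behavior T A1 B1 C1 D1 x10 w /\ behavior T A2 B2 C2 D2 x20 w) <->
   (exists l1 l2 : 'cV[R]_(T * nu),
      row_mx H1 H2 *m col_mx l1 l2 = w20 - w10)) /\
  (forall w, (behavior T A1 B1 C1 D1 x10 w /\ behavior T A2 B2 C2 D2 x20 w) <->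
   (exists l1 l2 : 'cV[R]_(T * nu),
      row_mx H1 H2 *m col_mx l1 l2 = w20 - w10 /\ w = H1 *m l1 + w10)).
Proof.
move=> u10 u20 rk1 rk2 hb1 hb2 on1 on2 w10 w20.
have E1 := @beh_system R nu ny n1 T A1 B1 C1 D1 x10 u1 y1 H1 u10 rk1 hb1 on1.
have E2 := @beh_system R nu ny n2 T A2 B2 C2 D2 x20 u2 y2 H2 u20 rk2 hb2 on2.
have P2 : forall w, (behavior T A1 B1 C1 D1 x10 w /\ behavior T A2 B2 C2 D2 x20 w) <->
   (exists l1 l2 : 'cV[R]_(T * nu),
      row_mx H1 H2 *m col_mx l1 l2 = w20 - w10 /\ w = H1 *m l1 + w10).
  move=> w; split.
  - move=> [/E1 [a wa] /E2 [b wb]]; exists a, (- b); split=> //.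
    have e1 : H1 *m a = w - w10 by rewrite wa addrK.
    have e2 : H2 *m b = w - w20 by rewrite wb addrK.
    by rewrite mul_row_col mulmxN e1 e2 opprB addrC addrA subrK.
  - move=> [l1 [l2 [eq ->]]]; split; first by apply/E1; exists l1.
    apply/E2; exists (- l2).
    move: eq; rewrite mul_row_col => eq.
    have e : H1 *m l1 = w20 - w10 - H2 *m l2 by rewrite -eq addrK.
    by rewrite mulmxN e addrAC subrK addrC.
split=> //.
split=> [[w /P2 [l1 [l2 [eq _]]]]|[l1 [l2 eq]]]; first by exists l1, l2.
by exists (H1 *m l1 + w10); apply/P2; exists l1, l2.
Qed.
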